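(* For all $0\neq d\in\mathbf{N}I$, $$\chi^{ss}_d=\sum_{d^*}(-1)^{s-1}v^{-\langle d^*\rangle}\chi_{d^1}*\dots*\chi_{d^s},\qquad\langle d^*\rangle=\sum_{1\le k<l\le s}\langle d^l,d^k\rangle,$$ where the sum runs over all tuples $d^*=(d^1,\dots,d^s)$ ($s\ge1$) of nonzero elements of $\mathbf{N}I$ with $\sum_kd^k=d$ such that $\mu(d^1+\dots+d^k)>\mu(d)$ for all $k=1,\dots,s-1$.
   Context: $Q$ is a finite quiver without oriented cycles with vertex set $I$, $r_{ij}$ arrows $i\to j$, Euler form $\langle i,j\rangle=\delta_{ij}-r_{ij}$. $\mathbf{k}$ is a finite field with $v^2$ elements. Fix a weight $\Theta=\sum_i\Theta_ii^*$ ($\Theta_i\in\mathbf Z$), slope $\mu(d)=\Theta(d)/\sum_id_i$ for $d\ne0$; $X$ is semistable if $\mu(\underline{\dim}U)\le\mu(\underline{\dim}X)$ for all nonzero subrepresentations $U$. Hall algebra $\mathcal H=\bigoplus_d\mathcal H_d$ of functions on isoclasses of representations of dimension type $d$, product $(f*g)(X)=v^{\langle e,d\rangle}\sum_{U\subseteq X}f(U)g(X/U)$ for $f\in\mathcal H_d,g\in\mathcal H_e$. $\chi_d$ is the constant function $1$ on representations of dimension type $d$; $\chi^{ss}_d$ is the characteristic function of the semistable ones. *)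

(* Defs.v *)
From HB Require Import structures.
From mathcomp Require Import all_boot all_order all_algebra all_field.
Set Implicit Arguments. Unset Strict Implicit. Unset Printing Implicit Defensive.
Import Order.TTheory GRing.Theory Num.Theory.
Local Open Scope ring_scope.

(* Quiver Q with vertex set I (a finite type) and r i j arrows i -> j.
   Representations over a finite field k, dimension vectors d : I -> nat,
   X_i = k^(d i) as ROW vectors; an arrow a : i -> j acts by x |-> x *m X i j a. *)
Section Hall.
Variables (I : finType) (r : I -> I -> nat) (k : finFieldType).

Definition arrow_rel : rel I := fun i j => (0 < r i j)%N.

Definition acyclic : Prop :=
  forall i j : I, (0 < r i j)%N -> ~~ connect arrow_rel j i.

Definition dimvec := I -> nat.

Definition rep (d : dimvec) := forall i j : I, 'I_(r i j) -> 'M[k]_(d i, d j).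

(* families of subspaces U_i of k^(d i), each given by its canonical
   (genmx) square matrix, so that each family of subspaces is counted once *)
Definition subfam (d : dimvec) := {dffun forall i : I, 'M[k]_(d i)}.

Definition is_subrep (d : dimvec) (X : rep d) (S : subfam d) : bool :=
  [forall i, S i == <<S i>>%MS] &&
  [forall i, forall j, forall a : 'I_(r i j), (S i *m X i j a <= S j)%MS].

Definition sub_dim (d : dimvec) (S : subfam d) : dimvec := fun i => \rank (S i).
Definition quot_dim (d : dimvec) (S : subfam d) : dimvec := fun i => \rank (S i)^C%MS.

Definition sub_rep (d : dimvec) (X : rep d) (S : subfam d) : rep (sub_dim S) :=
  fun i j a => row_base (S i) *m X i j a *m pinvmx (row_base (S j)).

(* the quotient X/U, identified with a complement of U, in the basis
   row_base (S i)^C; the arrow is followed by projection along U_j *)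
Definition quot_rep (d : dimvec) (X : rep d) (S : subfam d) : rep (quot_dim S) :=
  fun i j a => row_base (S i)^C%MS *m X i j a *m proj_mx (S j)^C%MS (S j)
               *m pinvmx (row_base (S j)^C%MS).

Definition euler (a b : dimvec) : int :=
  (\sum_i ((a i * b i)%N)%:Z - \sum_i \sum_j ((r i j * a i * b j)%N)%:Z)%R.

Definition vq : algC := sqrtC (#|k|%:R).

(* elements of the Hall algebra: functions on representations (of all
   dimension types), with values in algC (containing Q(v)) *)
Definition hall := forall d : dimvec, rep d -> algC.

(* (f*g)(X) = sum_{U <= X} v^<dim X/U, dim U> f(U) g(X/U);
   for f in H_d, g in H_e this is v^<e,d> sum_U f(U) g(X/U) *)
Definition hall_mul (F G : hall) : hall := fun d X =>
  \sum_(S : subfam d | is_subrep X S)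
     vq ^ (euler (quot_dim S) (sub_dim S)) * F _ (sub_rep X S) * G _ (quot_rep X S).

Definition dimeq (a b : dimvec) : bool := [forall i, a i == b i].

Definition chi (d : dimvec) : hall := fun e X => if dimeq e d then 1 else 0.

Definition totdim (a : dimvec) : nat := (\sum_i a i)%N.

Definition theta_of (Theta : I -> int) (a : dimvec) : int := \sum_i Theta i * (a i)%:Z.

Definition slope (Theta : I -> int) (a : dimvec) : rat :=
  (theta_of Theta a)%:~R / (totdim a)%:R.

Definition semistable (Theta : I -> int) (d : dimvec) (X : rep d) : bool :=
  [forall S : subfam d, (is_subrep X S && (0 < totdim (sub_dim S))%N) ==>
                        (slope Theta (sub_dim S) <= slope Theta d)].

Definition chi_ss (Theta : I -> int) (d : dimvec) : hall :=
  fun e X => if dimeq e d && semistable Theta X then 1 else 0.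

Fixpoint chi_prod (e : dimvec) (L : seq dimvec) : hall :=
  match L with
  | [::] => chi e
  | e' :: L' => hall_mul (chi e) (chi_prod e' L')
  end.

(* tuples d^* = (d^1,...,d^s) encoded as t : 'I_s -> {ffun I -> 'I_(N.+1)},
   N = totdim d (every component of every d^k is <= N) *)
Definition dv (N : nat) (x : {ffun I -> 'I_N.+1}) : dimvec := fun i => x i.

Definition dseq (N s : nat) (t : {ffun 'I_s -> {ffun I -> 'I_N.+1}}) : seq dimvec :=
  [seq dv (t l) | l <- enum 'I_s].

Definition partial (N s : nat) (t : {ffun 'I_s -> {ffun I -> 'I_N.+1}}) (l : 'I_s)
  : dimvec := fun i => (\sum_(m < s | (m <= l)%N) dv (t m) i)%N.

Definition admissible (Theta : I -> int) (d : dimvec) (N s : nat)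
  (t : {ffun 'I_s -> {ffun I -> 'I_N.+1}}) : bool :=
  [&& (0 < s)%N,
      [forall l, (0 < totdim (dv (t l)))%N],
      dimeq (fun i => (\sum_(l < s) dv (t l) i)%N) d &
      [forall l : 'I_s, (l.+1 < s)%N ==> (slope Theta d < slope Theta (partial t l))]].

Definition euler_star (N s : nat) (t : {ffun 'I_s -> {ffun I -> 'I_N.+1}}) : int :=
  \sum_(l < s) \sum_(m < s | (m < l)%N) euler (dv (t l)) (dv (t m)).

End Hall.

(* Main.v *)
Require Import Defs.
From HB Require Import structures.
From mathcomp Require Import all_boot all_order all_algebra all_field.
From Stdlib Require Import FunctionalExtensionality Lia.
From mathcomp Require Import zify.
Import Order.TTheory GRing.Theory Num.Theory.
Set Implicit Arguments. Unset Strict Implicit. Unset Printing Implicit Defensive.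
Local Open Scope ring_scope.

Definition lef (I : finType) (k : finFieldType) (n : dimvec I) (A B : subfam k n) :=
  [forall i, (A i <= B i)%MS].
Definition canon (I : finType) (k : finFieldType) (n : dimvec I) (A : subfam k n) :=
  forall i, A i = <<A i>>%MS.

Lemma subrep_canon (I : finType) (r : I -> I -> nat) (k : finFieldType) (n : dimvec I)
  (X : rep r k n) A : is_subrep X A -> canon A.
Proof. by case/andP=> /forallP h _ i; apply/eqP. Qed.

Lemma lef_antisym (I : finType) (k : finFieldType) (n : dimvec I) (A B : subfam k n) :
  canon A -> canon B -> lef A B -> lef B A -> A = B.
Proof.
move=> cA cB /forallP h1 /forallP h2; apply/ffunP=> i.
by rewrite cA cB; apply/genmxP; rewrite h1 h2.
Qed.

Lemma mulmxA4 (R : pzRingType) n1 n2 n3 n4 n5 n6 (M : 'M[R]_(n1, n2)) (c : 'M_(n2, n3))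
  (x : 'M_(n3, n4)) (p : 'M_(n4, n5)) (q : 'M_(n5, n6)) :
  M *m (c *m x *m p *m q) = M *m c *m x *m p *m q.
Proof. by rewrite !mulmxA. Qed.

Section LinAlg.
Variables (I : finType) (r : I -> I -> nat) (k : finFieldType).
Variables (d : dimvec I) (X : rep r k d) (S : subfam k d).
Hypothesis hS : is_subrep X S.

Let C i : 'M[k]_(\rank (S i)^C, d i) := row_base (S i)^C%MS.
Let P i : 'M[k]_(d i) := proj_mx (S i)^C%MS (S i).
Let Y := quot_rep X S.

Definition phiS (T : subfam k (quot_dim S)) : subfam k d :=
  finfun (fun i => <<(T i *m C i + S i)%MS>>%MS).
Definition psiS (T : subfam k d) : subfam k (quot_dim S) :=
  finfun (fun i => <<T i *m P i *m pinvmx (C i)>>%MS).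

Lemma Scan : canon S. Proof. exact: subrep_canon hS. Qed.

Lemma capSC i : ((S i)^C :&: S i)%MS = 0.
Proof. by rewrite capmxC capmx_compl. Qed.

Lemma CfreeE i : row_free (C i).
Proof. exact: row_base_free. Qed.

Lemma CeqE i : (C i :=: (S i)^C)%MS.
Proof. exact: eq_row_base. Qed.

Lemma full_SC i m (w : 'M[k]_(m, d i)) : (w <= (S i)^C + S i)%MS.
Proof. by rewrite addsmxC; apply: submx_full; exact: addsmx_compl_full. Qed.

Lemma wP_C i m (w : 'M[k]_(m, d i)) : (w *m P i *m pinvmx (C i) *m C i = w *m P i).
Proof. by apply: mulmxKpV; rewrite (CeqE i) proj_mx_sub. Qed.

Lemma TP_le i m (T : 'M[k]_(m, d i)) : (S i <= T)%MS -> (T *m P i <= T)%MS.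
Proof.
move=> hST.
have h := proj_mx_compl_sub (full_SC T).
have -> : T *m P i = T - (T - T *m P i) by rewrite opprB addrC subrK.
by apply: addmx_sub; rewrite ?submx_refl // eqmx_opp (submx_trans h).
Qed.

Lemma T_le_TP i m (T : 'M[k]_(m, d i)) : (T <= T *m P i + S i)%MS.
Proof.
have h := proj_mx_compl_sub (full_SC T).
have -> : T = T *m P i + (T - T *m P i) by rewrite addrC subrK.
by apply: addmx_sub_adds; rewrite ?submx_refl // addrC subrK.
Qed.

Lemma psi_phi T : canon T -> psiS (phiS T) = T.
Proof.
move=> hT; apply/ffunP=> i; rewrite !ffunE [RHS]hT; apply/genmxP.
have e1 : (((T i *m C i + S i)%MS *m P i) :=: T i *m C i)%MS.
  apply: eqmx_trans (addsmxMr _ _ _) _.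
  rewrite (proj_mx_0 (capSC i) (submx_refl _)) proj_mx_id ?capSC //.
    exact: addsmx0.
  by rewrite -(CeqE i) submxMl.
have e2 := eqmxMr (pinvmx (C i)) e1.
rewrite (mulmxKp (CfreeE i)) in e2.
apply/eqmxP; exact: eqmx_trans (eqmxMr _ (eqmxMr _ (genmxE _))) e2.
Qed.

Lemma phi_canon T : canon (phiS T).
Proof. by move=> i; rewrite ffunE genmx_id. Qed.

Lemma psi_canon T : canon (psiS T).
Proof. by move=> i; rewrite ffunE genmx_id. Qed.

Lemma S_le_phi T : lef S (phiS T).
Proof. by apply/forallP=> i; rewrite ffunE genmxE addsmxSr. Qed.

Lemma phi_lef T1 T2 : lef T1 T2 -> lef (phiS T1) (phiS T2).
Proof.
move/forallP=> h; apply/forallP=> i; rewrite !ffunE !genmxE.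
by apply: addsmxS; rewrite ?submx_refl // submxMr.
Qed.

Lemma psi_lef T1 T2 : lef T1 T2 -> lef (psiS T1) (psiS T2).
Proof.
move/forallP=> h; apply/forallP=> i; rewrite !ffunE !genmxE.
by rewrite !submxMr.
Qed.

Lemma lef_phi T1 T2 : canon T1 -> canon T2 ->
  lef (phiS T1) (phiS T2) = lef T1 T2.
Proof.
move=> c1 c2; apply/idP/idP; last exact: phi_lef.
by move/psi_lef; rewrite !psi_phi.
Qed.

Lemma rank_phi T i : \rank (phiS T i) = (\rank (T i) + \rank (S i))%N.
Proof.
rewrite ffunE genmxE mxrank_disjoint_sum ?mxrankMfree ?CfreeE //.
apply/eqP; rewrite -submx0 -(capSC i) capmxS ?submx_refl //.
by rewrite -(CeqE i) submxMl.
Qed.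

Lemma phi_psi T : is_subrep X T -> lef S T -> phiS (psiS T) = T.
Proof.
move=> hT /forallP hST; apply/ffunP=> i; rewrite ffunE [RHS](subrep_canon hT).
apply/genmxP; apply/eqmxP.
have e1 : ((psiS T i *m C i) :=: T i *m P i)%MS.
  rewrite ffunE; apply: eqmx_trans (eqmxMr _ (genmxE _)) _.
  by rewrite wP_C.
apply/eqmxP/andP; split.
  by rewrite addsmx_sub e1 hST andbT TP_le.
apply: submx_trans (T_le_TP (T i)) _.
by apply: addsmxS; rewrite ?submx_refl // e1.
Qed.

Lemma phi_sub T : is_subrep Y T -> is_subrep X (phiS T).
Proof.
move=> hT; apply/andP; split.
  by apply/forallP=> i; rewrite ffunE genmx_id.
case/andP: hT => _ /forallP hT; case/andP: hS => _ /forallP hS'.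
apply/forallP=> i; apply/forallP=> j; apply/forallP=> a.
move/forallP: (hT i) => /(_ j) /forallP /(_ a) hTa.
move/forallP: (hS' i) => /(_ j) /forallP /(_ a) hSa.
rewrite !ffunE (eqmxMr _ (genmxE _)) genmxE addsmxMr addsmx_sub.
apply/andP; split; last exact: (submx_trans hSa (addsmxSr _ _)).
set w := T i *m C i *m @X i j a.
have hw := add_proj_mx (capSC j) (full_SC w).
rewrite -hw; apply: addmx_sub_adds; last exact: proj_mx_sub.
rewrite -(wP_C w); apply: submxMr.
by move: hTa; rewrite /Y /quot_rep /w !mulmxA.
Qed.

Lemma Yarr i j (a : 'I_(r i j)) :
  Y a = C i *m @X i j a *m P j *m pinvmx (C j).
Proof. by []. Qed.

Lemma psi_sub T : is_subrep X T -> lef S T -> is_subrep Y (psiS T).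
Proof.
move=> hT hST; apply/andP; split.
  by apply/forallP=> i; rewrite ffunE genmx_id.
move/forallP: hST => hST.
case/andP: hT => _ /forallP hT.
apply/forallP=> i; apply/forallP=> j; apply/forallP=> a.
move/forallP: (hT i) => /(_ j) /forallP /(_ a) hTa.
rewrite !ffunE (eqmxMr _ (genmxE _)) genmxE Yarr.
have -> : T i *m P i *m pinvmx (C i) *m (C i *m @X i j a *m P j *m pinvmx (C j))
   = T i *m P i *m @X i j a *m P j *m pinvmx (C j).
  by rewrite mulmxA4 wP_C.
apply: submxMr; apply: submxMr; apply: submx_trans hTa.
by apply: submxMr; rewrite TP_le.
Qed.

End LinAlg.

Section RPdef.
Variables (I : finType) (r : I -> I -> nat) (k : finFieldType).

Definition dimdiff (d : dimvec I) (a : subfam k d) (b : dimvec I) : dimvec I :=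
  fun i => (\rank (a i) - b i)%N.
Definition rk (d : dimvec I) (a : subfam k d) : dimvec I := fun i => \rank (a i).

Fixpoint RP (d : dimvec I) (X : rep r k d) (S : subfam k d) (e : dimvec I)
   (L : seq (dimvec I)) : algC :=
  match L with
  | [::] => if dimeq (fun i => d i - \rank (S i))%N e then 1 else 0
  | e' :: L' => \sum_(T : subfam k d | is_subrep X T && lef S T &&
                    dimeq (fun i => \rank (T i) - \rank (S i))%N e)
       vq k ^ (euler r (fun i => d i - \rank (T i))%N
                       (fun i => \rank (T i) - \rank (S i))%N) * RP X T e' L'
  end.

Lemma lef_trans (d : dimvec I) (A B C : subfam k d) : lef A B -> lef B C -> lef A C.
Proof.
move=> /forallP h1 /forallP h2; apply/forallP=> i; exact: submx_trans (h1 i) (h2 i).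
Qed.

Lemma dimeq_ext (a b c : dimvec I) : a =1 b -> dimeq a c = dimeq b c.
Proof. by move=> h; rewrite (functional_extensionality _ _ h). Qed.

Lemma euler_ext (a b a' b' : dimvec I) : a =1 a' -> b =1 b' -> euler r a b = euler r a' b'.
Proof.
by move=> h1 h2; rewrite (functional_extensionality _ _ h1) (functional_extensionality _ _ h2).
Qed.

Section Quot.
Variables (d : dimvec I) (X : rep r k d) (S : subfam k d).
Hypothesis hS : is_subrep X S.
Let Y := quot_rep X S.

Lemma reindex_phi (F : subfam k d -> algC) (Q : pred (subfam k d)) :
  \sum_(T' | is_subrep X T' && lef S T' && Q T') F T' =
  \sum_(T | is_subrep Y T && Q (@phiS _ _ _ S T)) F (@phiS _ _ _ S T).
Proof.
rewrite (reindex_onto (@phiS _ _ _ S) (psiS S)); last first.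
  by move=> T /andP [/andP [h1 h2] _]; rewrite (phi_psi h1).
apply: eq_bigl => T; apply/idP/idP.
  case/andP=> /andP [/andP [h1 h2] h3] /eqP h4.
  by rewrite h3 andbT -h4 psi_sub.
case/andP=> h1 h2.
by rewrite (phi_sub hS) // S_le_phi h2 (psi_phi (subrep_canon h1)) eqxx.
Qed.

Lemma rank_phiS T i : \rank (@phiS _ _ _ S T i) = (\rank (T i) + \rank (S i))%N.
Proof. exact: rank_phi. Qed.

Lemma rankS_le i : (\rank (S i) <= d i)%N.
Proof. exact: rank_leq_col. Qed.

Lemma transfer L : forall e T, is_subrep Y T -> RP Y T e L = RP X (@phiS _ _ _ S T) e L.
Proof.
elim: L => [|e' L IH] e T hT /=.
  congr (if _ then _ else _); apply: dimeq_ext => i.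
  by rewrite rank_phiS addnC subnDA; congr (_ - _)%N; exact: mxrank_compl.
have e1 : forall T2, lef (@phiS _ _ _ S T) T2 = lef S T2 && lef (@phiS _ _ _ S T) T2.
  by move=> T2; apply/idP/idP => [h|/andP [] //]; rewrite h andbT (lef_trans (S_le_phi T) h).
under [RHS]eq_bigl => T2 do rewrite -andbA e1 !andbA -andbA.
rewrite reindex_phi; apply: eq_big => [T2|T2].
  case h2: (is_subrep Y T2) => //=.
  rewrite lef_phi; [|exact: subrep_canon hT|exact: subrep_canon h2].
  congr (_ && _); apply: dimeq_ext => i; rewrite !rank_phiS.
  by rewrite subnDr.
case/andP=> /andP [h2 _] _; rewrite IH //; congr (_ ^ _ * _).
apply: euler_ext => i; rewrite ?rank_phiS.
  by rewrite addnC subnDA; congr (_ - _)%N; exact: mxrank_compl.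
by rewrite subnDr.
Qed.

End Quot.

Lemma chi_quot L : forall e (d : dimvec I) (X : rep r k d) (S : subfam k d),
  is_subrep X S -> chi_prod e L (quot_rep X S) = RP X S e L.
Proof.
elim: L => [|e' L IH] e d X S hS /=.
  rewrite /chi; congr (if _ then _ else _); apply: dimeq_ext => i.
  exact: mxrank_compl.
rewrite /hall_mul (reindex_phi hS) [RHS]big_mkcondr /=.
apply: eq_bigr => T hT.
rewrite IH // transfer //.
have e1 : sub_dim T =1 (fun i => \rank (phiS T i) - \rank (S i))%N.
  by move=> i; rewrite rank_phiS addnK.
rewrite /chi (dimeq_ext _ e1).
case: ifP => _; last by rewrite mulr0 mul0r.
rewrite mulr1; congr (_ ^ _ * _); apply: euler_ext => // i.
rewrite rank_phiS /quot_dim mxrank_compl addnC subnDA; congr (_ - _)%N.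
exact: mxrank_compl.
Qed.

Definition S0 (d : dimvec I) : subfam k d := finfun (fun i => 0).

Lemma S0_sub (d : dimvec I) (X : rep r k d) : is_subrep X (S0 d).
Proof.
apply/andP; split; first by apply/forallP=> i; rewrite ffunE genmx0.
apply/forallP=> i; apply/forallP=> j; apply/forallP=> a.
by rewrite !ffunE mul0mx sub0mx.
Qed.

Lemma rank_S0 (d : dimvec I) i : \rank (S0 d i) = 0%N.
Proof. by rewrite ffunE mxrank0. Qed.

Lemma lef_S0 (d : dimvec I) (T : subfam k d) : lef (S0 d) T.
Proof. by apply/forallP=> i; rewrite ffunE sub0mx. Qed.

Lemma chi_top L e (d : dimvec I) (X : rep r k d) :
  chi_prod e L X = RP X (S0 d) e L.
Proof.
case: L => [|e' L] /=.
  rewrite /chi; congr (if _ then _ else _); apply: dimeq_ext => i.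
  by rewrite rank_S0 subn0.
rewrite /hall_mul.
under [RHS]eq_bigl => T do rewrite lef_S0 andbT.
rewrite [RHS]big_mkcondr /=.
apply: eq_bigr => T hT.
rewrite chi_quot //.
have e1 : sub_dim T =1 (fun i => \rank (T i) - \rank (S0 d i))%N.
  by move=> i; rewrite rank_S0 subn0.
rewrite /chi (dimeq_ext _ e1).
case: ifP => _; last by rewrite mulr0 mul0r.
rewrite mulr1; congr (_ ^ _ * _); apply: euler_ext => // i.
exact: mxrank_compl.
Qed.

End RPdef.

Section NPdef.
Variables (I : finType) (r : I -> I -> nat) (k : finFieldType).

Fixpoint NP (d : dimvec I) (X : rep r k d) (S : subfam k d) (e : dimvec I)
   (L : seq (dimvec I)) : algC :=
  match L with
  | [::] => if dimeq (fun i => d i - \rank (S i))%N e then 1 else 0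
  | e' :: L' => \sum_(T : subfam k d | is_subrep X T && lef S T &&
                    dimeq (fun i => \rank (T i) - \rank (S i))%N e) NP X T e' L'
  end.

Definition sumL (L : seq (dimvec I)) : dimvec I := fun i => (\sum_(x <- L) x i)%N.

Fixpoint EL (L : seq (dimvec I)) : int :=
  match L with
  | [::] => 0
  | e :: L' => euler r (sumL L') e + EL L'
  end.

Lemma vq_neq0 : vq k != 0.
Proof.
rewrite /vq sqrtC_eq0 pnatr_eq0 -lt0n; apply/card_gt0P; by exists 0.
Qed.

Lemma euler0l b : euler r (fun _ => 0%N) b = 0.
Proof.
rewrite /euler big1 ?big1 ?subrr // => i _; first by rewrite big1 // => j _; rewrite muln0 mul0n.
Qed.

Lemma dimeqP (a b : dimvec I) : reflect (a =1 b) (dimeq a b).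
Proof. by apply: (iffP forallP) => h i; apply/eqP. Qed.

Lemma NP_nz (d : dimvec I) (X : rep r k d) L : forall e S,
  NP X S e L != 0 -> forall i, (d i - \rank (S i))%N = sumL (e :: L) i.
Proof.
rewrite /sumL; elim: L => [|e' L IH] e S /=.
  by case: ifP => [/dimeqP h _ i|]; rewrite ?eqxx // big_cons big_nil addn0 h.
move=> hnz.
have [T /andP [/andP [/andP [hT hST] /dimeqP hd] hN]] :
  exists T, (is_subrep X T && lef S T &&
      dimeq (fun i => \rank (T i) - \rank (S i))%N e) && (NP X T e' L != 0).
  apply/existsP; apply: contraR hnz; rewrite negb_exists => /forallP h.
  apply/eqP; apply: big1 => T hT; move: (h T); rewrite hT /=.
  by move/negPn/eqP.
move=> i; have h := IH _ _ hN i; rewrite big_cons in h.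
rewrite !big_cons -h -hd.
have h1 : (\rank (S i) <= \rank (T i))%N by apply: mxrankS; move/forallP: hST.
have h2 : (\rank (T i) <= d i)%N by apply: rank_leq_col.
lia.
Qed.

Lemma RP_NP (d : dimvec I) (X : rep r k d) L : forall e S,
  RP X S e L = vq k ^ (EL (e :: L)) * NP X S e L.
Proof.
elim: L => [|e' L IH] e S /=.
  have -> : sumL [::] = (fun _ => 0%N) by apply: functional_extensionality => i; rewrite /sumL big_nil.
  by rewrite euler0l add0r expr0z mul1r.
rewrite mulr_sumr; apply: eq_bigr => T /andP [_ /dimeqP hd].
rewrite IH mulrA -expfzDr ?vq_neq0 //.
have [->|hnz] := eqVneq (NP X T e' L) 0; first by rewrite !mulr0.
congr (_ ^ _ * _); congr (_ + _).
apply: euler_ext => // i; exact: NP_nz hnz i.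
Qed.

End NPdef.

Section Tuples.
Variables (D : finType).

Definition fcons s (x : D) (t : {ffun 'I_s -> D}) : {ffun 'I_s.+1 -> D} :=
  [ffun i => if unlift ord0 i is Some j then t j else x].
Definition ftail s (t : {ffun 'I_s.+1 -> D}) : {ffun 'I_s -> D} :=
  [ffun j => t (lift ord0 j)].

Lemma fcons0 s x (t : {ffun 'I_s -> D}) : fcons x t ord0 = x.
Proof. by rewrite ffunE unlift_none. Qed.

Lemma fconsS s x (t : {ffun 'I_s -> D}) j : fcons x t (lift ord0 j) = t j.
Proof. by rewrite ffunE liftK. Qed.

Lemma fcons_eta s (t : {ffun 'I_s.+1 -> D}) : fcons (t ord0) (ftail t) = t.
Proof.
apply/ffunP=> i; rewrite ffunE; case: unliftP => [j ->|->] //.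
by rewrite ffunE.
Qed.

Lemma ftail_fcons s x (t : {ffun 'I_s -> D}) : ftail (fcons x t) = t.
Proof. by apply/ffunP=> j; rewrite ffunE fconsS. Qed.

Lemma sum_fcons s (F : {ffun 'I_s.+1 -> D} -> algC) :
  \sum_t F t = \sum_x \sum_(t : {ffun 'I_s -> D}) F (fcons x t).
Proof.
rewrite pair_big /=.
rewrite (reindex (fun p : D * {ffun 'I_s -> D} => fcons p.1 p.2)) //.
apply: onW_bij; exists (fun t : {ffun 'I_s.+1 -> D} => (t ord0, ftail t)).
  by case=> x t /=; rewrite fcons0 ftail_fcons.
by move=> t /=; rewrite fcons_eta.
Qed.

Lemma forall_ordS s (P : 'I_s.+1 -> bool) :
  [forall l, P l] = P ord0 && [forall l : 'I_s, P (lift ord0 l)].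
Proof.
apply/forallP/andP => [h|[h0 /forallP h] l]; first by split=> //; apply/forallP.
by case: (unliftP ord0 l) => [j ->|->].
Qed.

End Tuples.

Section Adm.
Variables (I : finType) (r : I -> I -> nat) (Theta : I -> int) (d : dimvec I).
Local Notation N := (totdim d).
Local Notation D := {ffun I -> 'I_N.+1}.

Lemma dseq_fcons s (x : D) (t : {ffun 'I_s -> D}) :
  dseq (fcons x t) = dv x :: dseq t.
Proof.
by rewrite /dseq enum_ordSl /= fcons0 -map_comp; congr (_ :: _); apply: eq_map => j /=; rewrite fconsS.
Qed.

Lemma dseq0 (t : {ffun 'I_0 -> D}) : dseq t = [::].
Proof. by rewrite /dseq; case: (enum 'I_0) (size_enum_ord 0) => [|? ?]. Qed.

Lemma eulerDl (a b c : dimvec I) :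
  euler r (fun i => a i + b i)%N c = euler r a c + euler r b c.
Proof.
rewrite /euler.
have e1 : \sum_i ((a i + b i) * c i)%N%:Z = \sum_i (a i * c i)%N%:Z + \sum_i (b i * c i)%N%:Z.
  by rewrite -big_split; apply: eq_bigr => i _; rewrite mulnDl PoszD.
have e2 : \sum_i \sum_j (r i j * (a i + b i) * c j)%N%:Z =
   \sum_i \sum_j (r i j * a i * c j)%N%:Z + \sum_i \sum_j (r i j * b i * c j)%N%:Z.
  rewrite -big_split; apply: eq_bigr => i _; rewrite -big_split; apply: eq_bigr => j _.
  by rewrite mulnDr mulnDl PoszD.
by rewrite e1 e2 opprD addrACA.
Qed.

Lemma euler_sumL (L : seq (dimvec I)) c :
  euler r (sumL L) c = \sum_(x <- L) euler r x c.
Proof.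
elim: L => [|x L IH].
  rewrite big_nil -(euler0l r c); apply: euler_ext => // i; by rewrite /sumL big_nil.
rewrite big_cons -IH -eulerDl; apply: euler_ext => // i; by rewrite /sumL big_cons.
Qed.

Lemma euler_star_fcons s (x : D) (t : {ffun 'I_s -> D}) :
  euler_star r (fcons x t) = euler r (sumL (dseq t)) (dv x) + euler_star r t.
Proof.
rewrite /euler_star big_ord_recl /= big1 ?add0r; last by move=> m; rewrite ltn0.
rewrite euler_sumL /dseq big_map big_enum /= -big_split /=.
apply: eq_bigr => l _.
rewrite big_mkcond big_ord_recl /= fcons0 fconsS; congr (_ + _).
rewrite [RHS]big_mkcond; apply: eq_bigr => m _.
by rewrite !fconsS.
Qed.

Lemma EL_dseq s (t : {ffun 'I_s -> D}) : EL r (dseq t) = euler_star r t.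
Proof.
elim: s t => [|s IH] t.
  by rewrite dseq0 /euler_star big_ord0.
by rewrite -(fcons_eta t) dseq_fcons euler_star_fcons /= IH.
Qed.

Definition addd (a b : dimvec I) : dimvec I := fun i => (a i + b i)%N.

Definition admT (b : dimvec I) s (t : {ffun 'I_s -> D}) : bool :=
  [&& (0 < s)%N, [forall l, (0 < totdim (dv (t l)))%N],
      dimeq (fun i => b i + \sum_(l < s) dv (t l) i)%N d &
      [forall l : 'I_s, (l.+1 < s)%N ==>
         (slope Theta d < slope Theta (addd b (partial t l)))]].

Lemma admissibleE s (t : {ffun 'I_s -> D}) :
  admissible Theta d t = admT (fun _ => 0%N) t.
Proof.
by rewrite /admissible /admT; congr [&& _, _, _ & _].
Qed.

Lemma partial_fcons0 s (x : D) (t : {ffun 'I_s -> D}) i :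
  partial (fcons x t) ord0 i = dv x i.
Proof.
by rewrite /partial big_mkcond big_ord_recl /= fcons0 big1 ?addn0.
Qed.

Lemma partial_fconsS s (x : D) (t : {ffun 'I_s -> D}) l i :
  partial (fcons x t) (lift ord0 l) i = (dv x i + partial t l i)%N.
Proof.
rewrite /partial big_mkcond big_ord_recl /= fcons0; congr (_ + _)%N.
rewrite [RHS]big_mkcond; apply: eq_bigr => m _.
by rewrite /= !fconsS.
Qed.

Lemma admT_fcons b s (x : D) (t : {ffun 'I_s -> D}) :
  admT b (fcons x t) = (0 < totdim (dv x))%N &&
    (if s is 0 then dimeq (addd b (dv x)) d
     else (slope Theta d < slope Theta (addd b (dv x))) && admT (addd b (dv x)) t).
Proof.
rewrite /admT forall_ordS fcons0 /=.
have -> : [forall l, (0 < totdim (dv (fcons x t (lift ord0 l))))%N] =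
          [forall l, (0 < totdim (dv (t l)))%N].
  by apply: eq_forallb => l; rewrite fconsS.
have -> : (fun i => b i + \sum_(l < s.+1) dv (fcons x t l) i)%N =
          (fun i => addd b (dv x) i + \sum_(l < s) dv (t l) i)%N.
  apply: functional_extensionality => i; rewrite big_ord_recl fcons0 /addd -addnA.
  by congr (_ + (_ + _))%N; apply: eq_bigr => l _; rewrite fconsS.
rewrite forall_ordS /=.
have -> : (slope Theta d < slope Theta (addd b (partial (fcons x t) ord0))) =
          (slope Theta d < slope Theta (addd b (dv x))).
  congr (_ < slope _ _); apply: functional_extensionality => i.
  by rewrite /addd partial_fcons0.
have -> : [forall l : 'I_s, ((bump 0 l).+1 < s.+1)%N ==>
         (slope Theta d <
          slope Theta (addd b (partial (fcons x t) (lift ord0 l))))] =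
          [forall l : 'I_s, (l.+1 < s)%N ==>
             (slope Theta d < slope Theta (addd (addd b (dv x)) (partial t l)))].
  apply: eq_forallb => l; rewrite /bump /= add1n ltnS.
  congr (_ ==> (_ < slope _ _)); apply: functional_extensionality => i.
  by rewrite /addd partial_fconsS addnA.
case: s t => [|s] t /=.
  have -> : (fun i => addd b (dv x) i + \sum_(l < 0) dv (t l) i)%N = addd b (dv x).
    by apply: functional_extensionality => i; rewrite big_ord0 addn0.
  have -> : [forall l : 'I_0, (0 < totdim (dv (t l)))%N] = true.
    by apply/forallP => -[].
  have -> : [forall l : 'I_0, (l.+1 < 0)%N ==> (slope Theta d < slope Theta (addd (addd b (dv x)) (partial t l)))] = true.
    by apply/forallP => -[].
  by rewrite !andbT.
by case: (0 < totdim (dv x))%N; case: (slope Theta d < _); case: [forall l, _]; case: dimeq; case: [forall l, _].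
Qed.

End Adm.

Section Arec.
Variables (I : finType) (r : I -> I -> nat) (k : finFieldType) (Theta : I -> int).
Variables (d : dimvec I) (X : rep r k d).
Local Notation N := (totdim d).
Local Notation D := {ffun I -> 'I_N.+1}.

Lemma dleN i : (d i <= N)%N.
Proof. by rewrite /totdim (bigD1 i) //= leq_addr. Qed.

Lemma rank_le (S : subfam k d) i : (\rank (S i) <= d i)%N.
Proof. exact: rank_leq_col. Qed.

Lemma lef_rank (S T : subfam k d) i : lef S T -> (\rank (S i) <= \rank (T i))%N.
Proof. by move/forallP=> h; apply: mxrankS. Qed.

Lemma eq_rank (S T : subfam k d) : canon S -> canon T -> lef S T ->
  (T == S) = [forall i, \rank (T i) == \rank (S i)].
Proof.
move=> cS cT hST; apply/idP/idP => [/eqP -> |/forallP h]; first by apply/forallP.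
apply/eqP.
apply: lef_antisym => //.
apply/forallP=> i; move/forallP: hST => /(_ i) hi.
have := (mxrank_leqif_eq hi).2; rewrite eq_sym (h i) => /esym /andP [].
by [].
Qed.

Lemma dimeq_diff (S T : subfam k d) (x : D) :
  dimeq (fun i => \rank (T i) - \rank (S i))%N (dv x) =
  (x == [ffun i => inord (\rank (T i) - \rank (S i))]).
Proof.
apply/dimeqP/eqP => [h|->] ; last first.
  move=> i; rewrite /dv ffunE inordK // ltnS.
  exact: leq_trans (leq_subr _ _) (leq_trans (rank_le T i) (dleN i)).
apply/ffunP=> i; rewrite ffunE; apply/val_inj => /=.
rewrite inordK; first by rewrite h.
exact: leq_trans (leq_subr _ _) (leq_trans (rank_le T i) (dleN i)).
Qed.

Lemma xsum (S T : subfam k d) (c : algC) :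
  canon S -> canon T -> lef S T ->
  \sum_(x : D) (if dimeq (fun i => \rank (T i) - \rank (S i))%N (dv x) &&
                  (0 < totdim (dv x))%N then c else 0)
  = if T != S then c else 0.
Proof.
move=> cS cT hST.
set xT : D := [ffun i => inord (\rank (T i) - \rank (S i))].
rewrite (bigD1 xT) //= big1 ?addr0; last first.
  by move=> x /negPf hx; rewrite dimeq_diff hx.
rewrite dimeq_diff eqxx /= (eq_rank cS cT hST).
have -> : (0 < totdim (dv xT))%N = ~~ [forall i, \rank (T i) == \rank (S i)].
  rewrite lt0n /totdim sum_nat_eq0; congr (~~ _); apply: eq_forallb => i.
  rewrite /dv ffunE inordK; last first.
    rewrite ltnS; exact: leq_trans (leq_subr _ _) (leq_trans (rank_le T i) (dleN i)).
  by rewrite implyTb subn_eq0 eqn_leq (lef_rank i hST) andbT.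
by [].
Qed.

Definition mkD (a : dimvec I) : D := [ffun i => inord (a i)].

Lemma dv_mkD (a : dimvec I) i : (a i <= N)%N -> dv (mkD a) i = a i.
Proof. by move=> h; rewrite /dv ffunE inordK. Qed.

Lemma dimeq_mkD (a : dimvec I) (x : D) : (forall i, a i <= N)%N ->
  dimeq a (dv x) = (x == mkD a).
Proof.
move=> ha; apply/dimeqP/eqP => [h|->] ; last by move=> i; rewrite dv_mkD.
apply/ffunP=> i; rewrite ffunE; apply/val_inj => /=.
by rewrite inordK ?h // ltnS -h.
Qed.

Lemma one_ffun0 (t t' : {ffun 'I_0 -> D}) : t = t'.
Proof. by apply/ffunP => -[]. Qed.

Definition t00 : {ffun 'I_0 -> D} := [ffun i => [ffun _ => ord0]].

Lemma sum_ffun0 (F : {ffun 'I_0 -> D} -> algC) : \sum_t F t = F t00.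
Proof. by apply: big_pred1 => t /=; rewrite (one_ffun0 t t00) eqxx. Qed.

Lemma base0 (S : subfam k d) :
  \sum_(x : D) \sum_(t : {ffun 'I_0 -> D})
     (if admT Theta (d:=d) (rk S) (fcons x t) then (-1)^+0 * NP X S (dv x) (dseq t) else 0)
  = if dimeq (rk S) d then 0 else 1.
Proof.
have ha : forall i, (d i - \rank (S i) <= N)%N.
  by move=> i; exact: leq_trans (leq_subr _ _) (dleN i).
under eq_bigr => x _ do rewrite sum_ffun0 admT_fcons dseq0 /= expr0 mul1r (dimeq_mkD _ ha).
rewrite (bigD1 (mkD (fun i => d i - \rank (S i))%N)) //= big1 ?addr0; last first.
  by move=> x /negPf ->; case: ifP.
rewrite eqxx.
have -> : dimeq (addd (rk S) (dv (mkD (fun i => d i - \rank (S i))%N))) d.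
  apply/dimeqP => i; rewrite /addd /rk dv_mkD // subnKC //; exact: rank_le.
have -> : (0 < totdim (dv (mkD (fun i => d i - \rank (S i))%N)))%N = ~~ dimeq (rk S) d.
  rewrite lt0n /totdim sum_nat_eq0; congr (~~ _); apply: eq_forallb => i.
  rewrite dv_mkD // /rk /= subn_eq0 eqn_leq rank_le /=.
  by [].
by rewrite andbT; case: dimeq.
Qed.

Definition Aterm s (S : subfam k d) : algC :=
  \sum_(x : D) \sum_(t : {ffun 'I_s -> D})
     (if admT Theta (rk S) (fcons x t) then (-1)^+s * NP X S (dv x) (dseq t) else 0).

Definition Aq n (S : subfam k d) : algC := \sum_(s < n) Aterm s S.

Definition Qd (S T : subfam k d) : bool :=
  is_subrep X T && lef S T && (T != S) && (slope Theta d < slope Theta (rk T)).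

Lemma if_sum (b : bool) (a : algC) (T : finType) (p : pred T) (F : T -> algC) :
  (if b then a * \sum_(j | p j) F j else 0) = \sum_j (if p j && b then a * F j else 0).
Proof.
case: b; last by rewrite big1 // => j _; rewrite andbF.
by rewrite mulr_sumr big_mkcond; apply: eq_bigr => j _; rewrite andbT.
Qed.

Lemma if_sum2 (c : bool) (T1 T2 : finType) (P : T1 -> T2 -> bool) (F : T1 -> T2 -> algC) :
  \sum_i \sum_j (if c && P i j then F i j else 0) =
  if c then \sum_i \sum_j (if P i j then F i j else 0) else 0.
Proof. by case: c => //; rewrite big1 // => i _; rewrite big1. Qed.

Lemma pT_addd (S T : subfam k d) (x : D) : lef S T ->
  dimeq (fun i => \rank (T i) - \rank (S i))%N (dv x) -> addd (rk S) (dv x) = rk T.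
Proof.
move=> hST /dimeqP h; apply: functional_extensionality => i.
by rewrite /addd /rk -h subnKC // lef_rank.
Qed.

Lemma boolA6 (a b c e f g : bool) :
  ((a && b) && c) && (e && (f && g)) = ((c && e) && ((a && b) && f)) && g.
Proof. by case: a; case: b; case: c; case: e; case: f; case: g. Qed.

Lemma step s (S : subfam k d) : is_subrep X S ->
  Aterm s.+1 S = - \sum_(T | Qd S T) Aterm s T.
Proof.
move=> hS; rewrite /Aterm.
under eq_bigr => x _ do rewrite sum_fcons.
under eq_bigr => x _ do under eq_bigr => y _ do under eq_bigr => t _ do
  rewrite admT_fcons dseq_fcons /= if_sum.
under eq_bigr => x _ do under eq_bigr => y _ do rewrite exchange_big.
under eq_bigr => x _ do rewrite exchange_big.
rewrite exchange_big.
rewrite (big_mkcond (Qd S)) -sumrN; apply: eq_bigr => T _.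
case hT: (is_subrep X T && lef S T); last first.
  rewrite big1; first by rewrite /Qd hT /= oppr0.
  by move=> x _; rewrite big1 // => y _; rewrite big1 // => t _; rewrite /= ?andFb.
case/andP: hT => hT hST.
have e1 : forall x : D, \sum_(y : D) \sum_(t : {ffun 'I_s -> D})
   (if [&& true && dimeq (fun i => \rank (T i) - \rank (S i))%N (dv x), (0 < totdim (dv x))%N,
       (slope Theta d < slope Theta (addd (rk S) (dv x))) &
       admT Theta (addd (rk S) (dv x)) (fcons y t)]
    then (-1) ^+ s.+1 * NP X T (dv y) (dseq t) else 0) =
   if dimeq (fun i => \rank (T i) - \rank (S i))%N (dv x) && (0 < totdim (dv x))%N then
     (if slope Theta d < slope Theta (rk T) then
        - \sum_y \sum_(t : {ffun 'I_s -> D})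
          (if admT Theta (rk T) (fcons y t) then (-1) ^+ s * NP X T (dv y) (dseq t) else 0)
      else 0) else 0.
  move=> x /=.
  case hx: (dimeq (fun i => \rank (T i) - \rank (S i))%N (dv x)); last first.
    by rewrite big1 // => y _; rewrite big1.
  case: (0 < totdim (dv x))%N; last by rewrite big1 // => y _; rewrite big1.
  rewrite (pT_addd hST hx) /=.
  case: ifP => _; last by rewrite big1 // => y _; rewrite big1.
  rewrite -sumrN; apply: eq_bigr => y _; rewrite -sumrN; apply: eq_bigr => t _.
  by case: ifP => h1; case: ifP => h2; rewrite ?oppr0 ?exprS ?mulN1r ?mulNr //; rewrite h2 in h1.
under eq_bigr => x _ do rewrite e1.
rewrite xsum; [|exact: subrep_canon hS|exact: subrep_canon hT|exact: hST].
by rewrite /Qd hT hST /=; case: (T != S); case: (_ < _); rewrite ?oppr0.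
Qed.

Lemma Aq_rec n (S : subfam k d) : is_subrep X S ->
  Aq n.+1 S = (if dimeq (rk S) d then 0 else 1) - \sum_(T | Qd S T) Aq n T.
Proof.
move=> hS; rewrite /Aq big_ord_recl /= -base0.
congr (_ + _).
under eq_bigr => s _ do rewrite /bump /= add1n step //.
rewrite sumrN exchange_big //.
Qed.

End Arec.

Section Chains.
Variables (I : finType) (r : I -> I -> nat) (k : finFieldType) (Theta : I -> int).
Variables (d : dimvec I) (X : rep r k d).
Local Notation N := (totdim d).
Local Notation T := (subfam k d).

Definition Pc (U : T) : bool :=
  is_subrep X U && (0 < totdim (rk U))%N && (slope Theta d < slope Theta (rk U)).
Definition ltS (S U : T) : bool := lef S U && (U != S).
Definition chainAb (S : T) (A : {set T}) : bool :=
  [forall U in A, Pc U && ltS S U] && [forall U in A, forall V in A, lef U V || lef V U].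
Definition Zs (S : T) : algC := \sum_(A : {set T} | chainAb S A) (-1)^+#|A|.

Lemma lef_refl (U : T) : lef U U.
Proof. by apply/forallP => i; exact: submx_refl. Qed.

Lemma sum_eq_le (a b : dimvec I) : (forall i, a i <= b i)%N ->
  (totdim b <= totdim a)%N -> forall i, a i = b i.
Proof.
move=> h hs i; apply/eqP; rewrite eqn_leq h /=.
have : (totdim a <= totdim b)%N by apply: leq_sum => j _; exact: h.
move=> hab; have e : totdim a = totdim b by apply/eqP; rewrite eqn_leq hab hs.
move: e; rewrite /totdim (bigD1 i) //= [X in _ = X -> _](bigD1 i) //= => e.
have : (\sum_(j | j != i) a j <= \sum_(j | j != i) b j)%N by apply: leq_sum => j _; exact: h.
lia.
Qed.

Lemma chain_canon S A U : chainAb S A -> U \in A -> canon U.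
Proof.
case/andP=> /forallP /(_ U) h _ hU; move: h; rewrite hU /=.
by case/andP=> /andP [/andP [hs _] _] _; exact: subrep_canon hs.
Qed.

Lemma chain_P S A U : chainAb S A -> U \in A -> Pc U && ltS S U.
Proof. by case/andP=> /forallP /(_ U) h _ hU; move: h; rewrite hU. Qed.

Lemma chain_cmp S A U V : chainAb S A -> U \in A -> V \in A -> lef U V || lef V U.
Proof.
by case/andP=> _ /forallP /(_ U) h hU hV; move: h; rewrite hU /= => /forallP /(_ V); rewrite hV.
Qed.

Definition minA (S : T) (A : {set T}) : T := odflt S [pick U in A | [forall V in A, lef U V]].

Lemma minA_ex S A : chainAb S A -> A != set0 ->
  exists2 U, U \in A & forall V, V \in A -> lef U V.
Proof.
move=> hA /set0Pn [U0 hU0].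
case: (arg_minnP (fun U : T => totdim (rk U)) hU0) => U hU hmin.
exists U => // V hV.
case/orP: (chain_cmp hA hU hV) => // hVU.
have e : forall i, \rank (V i) = \rank (U i).
  apply: sum_eq_le => [i|]; first exact: lef_rank.
  exact: hmin.
have -> : U = V => //; last exact: lef_refl.
apply/eqP; rewrite (eq_rank (chain_canon hA hV) (chain_canon hA hU) hVU).
by apply/forallP => i; rewrite e.
Qed.

Lemma minA_in S A : chainAb S A -> A != set0 ->
  minA S A \in A /\ forall V, V \in A -> lef (minA S A) V.
Proof.
move=> hA hne; rewrite /minA; case: pickP => [U /andP [hU /forallP h] | h] /=.
  by split=> // V hV; move: (h V); rewrite hV.
case: (minA_ex hA hne) => U hU hmin; move: (h U); rewrite hU /=.
by move/forallP => []; move=> V; apply/implyP => hV; exact: hmin.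
Qed.

Lemma minA_uniq S A U : chainAb S A -> U \in A -> (forall V, V \in A -> lef U V) ->
  minA S A = U.
Proof.
move=> hA hU hmin.
have hne : A != set0 by apply/set0Pn; exists U.
case: (minA_in hA hne) => hm hm2.
apply: lef_antisym; [exact: chain_canon hA hm | exact: chain_canon hA hU | exact: hm2 | exact: hmin].
Qed.

Lemma QdE (S U : T) : is_subrep X S -> Qd Theta X S U = Pc U && ltS S U.
Proof.
move=> hS; rewrite /Qd /Pc /ltS.
case hU: (is_subrep X U) => //=; case hSU: (lef S U); last by rewrite /= !andbF.
rewrite /=.
case hne: (U != S) => /=; last by rewrite !andbF.
rewrite andbT; case: (slope _ _ < _); last by rewrite !andbF.
rewrite !andbT; symmetry; rewrite lt0n; apply/eqP => h0.
move: hne; rewrite (eq_rank (subrep_canon hS) (subrep_canon hU) hSU) => /negP []. 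
apply/forallP => i.
have : (\rank (U i) == 0)%N.
  by move: h0; rewrite /totdim => /eqP; rewrite sum_nat_eq0 => /forallP /(_ i).
have := lef_rank i hSU; lia.
Qed.

Lemma chain0 (S : T) : chainAb S set0.
Proof. by apply/andP; split; apply/forallP => U; rewrite in_set0. Qed.

Lemma Zs_rec (S : T) : is_subrep X S -> Zs S = 1 - \sum_(U | Qd Theta X S U) Zs U.
Proof.
move=> hS; rewrite /Zs (bigD1 set0) ?chain0 //= cards0 expr0; congr (_ + _).
rewrite (partition_big (minA S) (Qd Theta X S)) /=; last first.
  move=> A /andP [hA hne]; case: (minA_in hA hne) => hm _.
  by rewrite QdE // (chain_P hA hm).
rewrite -sumrN; apply: eq_bigr => U hU.
have [hPU hSU] : Pc U /\ ltS S U by apply/andP; rewrite -QdE.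
rewrite (reindex_onto (fun A' => U |: A') (fun A => A :\ U)) /=; last first.
  move=> A /andP [/andP [hA hne] /eqP hm]; apply: setD1K.
  by case: (minA_in hA hne); rewrite hm.
rewrite -sumrN; apply: eq_big => A'.
  apply/idP/idP.
    case/andP => [/andP [/andP [hA hne] /eqP hm] /eqP hD].
    have hUA : U \notin A' by rewrite -hD !inE eqxx.
    case: (minA_in hA hne); rewrite hm => _ hmin.
    apply/andP; split.
      apply/forallP => V; apply/implyP => hV.
      have hV' : V \in U |: A' by rewrite in_setU1 hV orbT.
      case/andP: (chain_P hA hV') => -> _ /=.
      rewrite /ltS hmin //=; apply/eqP => eVU; move: hUA; rewrite -eVU hV.
      by [].
    apply/forallP => V; apply/implyP => hV; apply/forallP => W; apply/implyP => hW.
    by apply: (chain_cmp hA); rewrite in_setU1 ?hV ?hW orbT.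
  move=> hC.
  have hUA : U \notin A'.
    apply/negP => hin; case/andP: (chain_P hC hin) => _ /andP [_].
    by rewrite eqxx.
  have cU : canon U by case/andP: hPU => /andP [h _] _; exact: subrep_canon h.
  have hC' : chainAb S (U |: A').
    apply/andP; split.
      apply/forallP => V; apply/implyP; rewrite in_setU1 => /orP [/eqP -> | hV].
        by rewrite hPU hSU.
      case/andP: (chain_P hC hV) => -> /andP [hUV hVU] /=.
      case/andP: hSU => hSU hUS.
      rewrite /ltS (lef_trans hSU hUV) /=.
      apply/negP => /eqP eVS; move: hUS; rewrite -eVS.
      rewrite -eVS in hSU.
      by rewrite (lef_antisym cU (chain_canon hC hV) hUV hSU) eqxx.
    apply/forallP => V; apply/implyP; rewrite in_setU1 => hV.
    apply/forallP => W; apply/implyP; rewrite in_setU1 => hW.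
    case/orP: hV => [/eqP -> | hV].
      case/orP: hW => [/eqP -> | hW]; first by rewrite lef_refl.
      by case/andP: (chain_P hC hW) => _ /andP [-> _].
    case/orP: hW => [/eqP -> | hW].
      by case/andP: (chain_P hC hV) => _ /andP [-> _]; rewrite orbT.
    exact: (chain_cmp hC).
  rewrite hC' /=.
  have -> : U |: A' != set0 by apply/set0Pn; exists U; rewrite setU11.
  rewrite (minA_uniq hC' (setU11 U A')) ?eqxx ?setU1K //=.
  move=> V; rewrite in_setU1 => /orP [/eqP -> | hV]; first exact: lef_refl.
  by case/andP: (chain_P hC hV) => _ /andP [].
move=> /andP [_ /eqP hD].
have hUA : U \notin A' by rewrite -hD !inE eqxx.
by rewrite cardsU1 hUA add1n exprS mulN1r.
Qed.

Lemma full_of_tot (S : T) : (N <= totdim (rk S))%N -> dimeq (rk S) d.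
Proof.
move=> h; apply/dimeqP; apply: sum_eq_le => // i; exact: rank_le.
Qed.

Lemma totdim_rk_le (S : T) : (totdim (rk S) <= N)%N.
Proof. by apply: leq_sum => i _; exact: rank_le. Qed.

Lemma Aq_Zs n : forall S : T, is_subrep X S -> ~~ dimeq (rk S) d ->
  (N - totdim (rk S) <= n)%N -> Aq Theta X n S = Zs S.
Proof.
elim: n => [|n IH] S hS hfull hn.
  by move: hfull; rewrite full_of_tot //; lia.
rewrite Aq_rec // (negbTE hfull) Zs_rec //; congr (_ - _); apply: eq_bigr => U hU.
move: (hU); rewrite /Qd => /andP [/andP [/andP [hUs hSU] hne] hsl].
apply: IH => //.
  apply/negP => /dimeqP h.
  have e : rk U = d by apply: functional_extensionality.
  by move: hsl; rewrite e ltxx.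
have hlt : (totdim (rk S) < totdim (rk U))%N.
  rewrite ltnNge; apply/negP => hle.
  move: hne; rewrite (eq_rank (subrep_canon hS) (subrep_canon hUs) hSU) => /negP []. 
  apply/forallP => i; apply/eqP; symmetry.
  by apply: (sum_eq_le (a := rk S) (b := rk U)) => // j; exact: lef_rank.
have := totdim_rk_le U; lia.
Qed.

End Chains.

Lemma slope_lt_aux (a b : int) (n m : nat) : (0 < n)%N -> (0 < m)%N ->
  ((a%:~R / n%:R : rat) < b%:~R / m%:R) = (a * m%:Z < b * n%:Z).
Proof.
move=> hn hm.
rewrite ltr_pdivrMr ?ltr0n // mulrAC ltr_pdivlMr ?ltr0n //.
rewrite -[m%:R]/((m%:Z)%:~R) -[n%:R]/((n%:Z)%:~R).
by rewrite -!intrM ltr_int.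
Qed.

Section Invol.
Variables (I : finType) (r : I -> I -> nat) (k : finFieldType) (Theta : I -> int).
Variables (d : dimvec I) (X : rep r k d).
Hypothesis hN : (0 < totdim d)%N.
Local Notation N := (totdim d).
Local Notation T := (subfam k d).

Definition hv (a : dimvec I) : int :=
  theta_of Theta a * (N%:Z) - theta_of Theta d * (totdim a)%:Z.
Definition hval (U : T) : int := hv (rk U).

Lemma slope_hv (a : dimvec I) : (0 < totdim a)%N ->
  (slope Theta d < slope Theta a) = (0 < hv a).
Proof.
move=> ha; rewrite /slope slope_lt_aux // /hv subr_gt0.
by [].
Qed.

Lemma hvD (a b : dimvec I) : hv (addd a b) = hv a + hv b.
Proof.
rewrite /hv /theta_of /totdim /addd.
have -> : \sum_i Theta i * (a i + b i)%N%:Z = \sum_i Theta i * (a i)%:Z + \sum_i Theta i * (b i)%:Z.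
  by rewrite -big_split; apply: eq_bigr => i _; rewrite PoszD mulrDr.
rewrite big_split /= PoszD.
rewrite mulrDl mulrDr.
by rewrite opprD addrACA.
Qed.

Lemma hv0 (a : dimvec I) : totdim a = 0%N -> hv a = 0.
Proof.
move=> h0; have e : forall i, a i = 0%N.
  by move=> i; move/eqP: h0; rewrite sum_nat_eq0 => /forallP /(_ i) /eqP.
rewrite /hv /theta_of h0 big1 ?mul0r ?mulr0 ?subr0 // => i _.
by rewrite e mulr0.
Qed.

Definition meet (U V : T) : T := finfun (fun i => <<(U i :&: V i)>>%MS).
Definition join (U V : T) : T := finfun (fun i => <<(U i + V i)%MS>>%MS).

Lemma meet_sub U V : is_subrep X U -> is_subrep X V -> is_subrep X (meet U V).
Proof.
move=> /andP [_ /forallP hU] /andP [_ /forallP hV]; apply/andP; split.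
  by apply/forallP => i; rewrite ffunE genmx_id.
apply/forallP => i; apply/forallP => j; apply/forallP => a.
move/forallP: (hU i) => /(_ j) /forallP /(_ a) hUa.
move/forallP: (hV i) => /(_ j) /forallP /(_ a) hVa.
rewrite !ffunE (eqmxMr _ (genmxE _)) genmxE sub_capmx.
apply/andP; split.
  exact: submx_trans (submxMr _ (capmxSl _ _)) hUa.
exact: submx_trans (submxMr _ (capmxSr _ _)) hVa.
Qed.

Lemma join_sub U V : is_subrep X U -> is_subrep X V -> is_subrep X (join U V).
Proof.
move=> /andP [_ /forallP hU] /andP [_ /forallP hV]; apply/andP; split.
  by apply/forallP => i; rewrite ffunE genmx_id.
apply/forallP => i; apply/forallP => j; apply/forallP => a.
move/forallP: (hU i) => /(_ j) /forallP /(_ a) hUa.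
move/forallP: (hV i) => /(_ j) /forallP /(_ a) hVa.
rewrite !ffunE (eqmxMr _ (genmxE _)) genmxE addsmxMr.
exact: addsmxS.
Qed.

Lemma lef_meetl U V : lef (meet U V) U.
Proof. by apply/forallP => i; rewrite ffunE genmxE capmxSl. Qed.
Lemma lef_meetr U V : lef (meet U V) V.
Proof. by apply/forallP => i; rewrite ffunE genmxE capmxSr. Qed.
Lemma meet_glb W U V : lef W U -> lef W V -> lef W (meet U V).
Proof.
move=> /forallP h1 /forallP h2; apply/forallP => i.
by rewrite ffunE genmxE sub_capmx h1 h2.
Qed.

Lemma hval_mod U V : hval (join U V) + hval (meet U V) = hval U + hval V.
Proof.
rewrite /hval -!hvD; congr hv; apply: functional_extensionality => i.
by rewrite /addd /rk !ffunE !mxrank_gen mxrank_sum_cap.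
Qed.

Lemma Pc_hval U : is_subrep X U -> Pc Theta X U = (0 < hval U).
Proof.
move=> hU; rewrite /Pc hU /=.
case: (posnP (totdim (rk U))) => [h0|hp].
  by rewrite /hval hv0 // h0.
by rewrite /= slope_hv.
Qed.

Lemma Pc_ltS0 U : Pc Theta X U -> ltS (S0 k d) U.
Proof.
case/andP => /andP [_ hp] _; rewrite /ltS lef_S0 /=.
apply/eqP => e; move: hp; rewrite e /totdim big1 // => i _.
by rewrite /rk rank_S0.
Qed.

Lemma Pc_sub U : Pc Theta X U -> is_subrep X U.
Proof. by case/andP => /andP []. Qed.

Section WithMax.
Variable m : T.
Hypotheses (hm : Pc Theta X m) (hmax : forall U, is_subrep X U -> hval U <= hval m).

Lemma Pc_meet U : Pc Theta X U -> Pc Theta X (meet U m).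
Proof.
move=> hU.
have sU := Pc_sub hU; have sm := Pc_sub hm.
rewrite Pc_hval ?meet_sub //.
rewrite Pc_hval // in hU.
have := hval_mod U m; have := hmax (join_sub sU sm).
move=> h1 h2.
have : hval (meet U m) = hval U + hval m - hval (join U m) by rewrite -h2 addrC addKr.
move=> ->; rewrite -addrA; apply: (lt_le_trans hU); rewrite lerDl subr_ge0.
exact: h1.
Qed.

Definition high (A : {set T}) : bool := [exists V in A, ~~ lef V m].
Definition minH (A : {set T}) : T :=
  odflt m [pick V in A | ~~ lef V m && [forall U in A, ~~ lef U m ==> lef V U]].
Definition tog (A : {set T}) (W : T) : {set T} := if W \in A then A :\ W else W |: A.
Definition finv (A : {set T}) : {set T} :=
  if high A then tog A (meet (minH A) m) else tog A m.

Lemma in_tog A W U : (U \in tog A W) = if U == W then W \notin A else U \in A.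
Proof.
rewrite /tog; case: ifP => hW; rewrite ?in_setD1 ?in_setU1;
  case: eqP => [->|] //=; by rewrite hW.
Qed.

Lemma togK A W : tog (tog A W) W = A.
Proof.
apply/setP => U; rewrite !in_tog; case: eqP => [->|] //.
by rewrite eqxx negbK.
Qed.

Lemma tog_sign A W : (-1) ^+ #|tog A W| = - (-1) ^+ #|A| :> algC.
Proof.
rewrite /tog; case: ifP => hW.
  by rewrite -[in RHS](setD1K hW) cardsU1 !inE eqxx /= add1n exprS mulN1r opprK.
by rewrite cardsU1 hW add1n exprS mulN1r.
Qed.

Lemma minH_spec A : chainAb Theta X (S0 k d) A -> high A ->
  [/\ minH A \in A, ~~ lef (minH A) m & forall U, U \in A -> ~~ lef U m -> lef (minH A) U].
Proof.
move=> hA hh.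
suff : exists V, [/\ V \in A, ~~ lef V m & forall U, U \in A -> ~~ lef U m -> lef V U].
  case=> V [hV hVm hmin].
  rewrite /minH; case: pickP => [W /and3P [hW hWm /forallP h]|h] /=.
    by split=> // U hU hUm; move: (h U); rewrite hU hUm.
  by move: (h V); rewrite hV hVm /=; move/negP; case; apply/forallP => U; apply/implyP => hU; apply/implyP; exact: hmin.
case/existsP: hh => V0 /andP [hV0 hV0m].
have hP0 : (V0 \in A) && ~~ lef V0 m by rewrite hV0.
case: (@arg_minnP _ V0 (fun U => (U \in A) && ~~ lef U m) (fun U : T => totdim (rk U)) hP0) => V /andP [hV hVm] hmin.
exists V; split=> // U hU hUm.
case/orP: (chain_cmp hA hV hU) => // hUV.
have e : forall i, \rank (U i) = \rank (V i).
  apply: sum_eq_le => [i|]; first exact: lef_rank.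
  by apply: hmin; rewrite hU.
have -> : V = U => //; last exact: lef_refl.
apply/eqP; rewrite (eq_rank (chain_canon hA hU) (chain_canon hA hV) hUV).
by apply/forallP => i; rewrite e.
Qed.

Lemma tog_chain A W : chainAb Theta X (S0 k d) A -> Pc Theta X W ->
  (forall U, U \in A -> lef U W || lef W U) -> chainAb Theta X (S0 k d) (tog A W).
Proof.
move=> hA hW hcmp.
have hin : forall U, U \in tog A W -> (U == W) || (U \in A).
  by move=> U; rewrite in_tog; case: eqP.
apply/andP; split.
  apply/forallP => U; apply/implyP => /hin /orP [/eqP -> | hU].
    by rewrite hW Pc_ltS0.
  exact: chain_P hA hU.
apply/forallP => U; apply/implyP => /hin hU; apply/forallP => V; apply/implyP => /hin hV.
case/orP: hU => [/eqP -> | hU].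
  case/orP: hV => [/eqP -> | hV]; first by rewrite lef_refl.
  by rewrite orbC hcmp.
case/orP: hV => [/eqP -> | hV]; first exact: hcmp.
exact: chain_cmp hA hU hV.
Qed.

Lemma notlow_ge A U : chainAb Theta X (S0 k d) A -> high A -> U \in A -> lef U m ->
  lef U (meet (minH A) m).
Proof.
move=> hA hh hU hUm; case: (minH_spec hA hh) => hV hVm hmin.
apply: meet_glb => //.
case/orP: (chain_cmp hA hU hV) => // hVU.
by move: hVm; rewrite (lef_trans hVU hUm).
Qed.

Lemma high_ge A U : chainAb Theta X (S0 k d) A -> high A -> U \in A -> ~~ lef U m ->
  lef (meet (minH A) m) U.
Proof.
move=> hA hh hU hUm; case: (minH_spec hA hh) => hV hVm hmin.
exact: lef_trans (lef_meetl _ _) (hmin U hU hUm).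
Qed.

Lemma finv_chain A : chainAb Theta X (S0 k d) A -> chainAb Theta X (S0 k d) (finv A).
Proof.
move=> hA; rewrite /finv; case: ifP => hh.
  case: (minH_spec hA hh) => hV hVm hmin.
  apply: tog_chain => //; first by apply: Pc_meet; case/andP: (chain_P hA hV).
  move=> U hU; case hUm: (lef U m); first by rewrite (notlow_ge hA hh hU hUm).
  by rewrite (high_ge hA hh hU) ?hUm ?orbT.
apply: tog_chain => // U hU.
move/negbT: hh; rewrite negb_exists => /forallP /(_ U); rewrite hU /= negbK => ->.
by [].
Qed.

Lemma finv_inv A : chainAb Theta X (S0 k d) A -> finv (finv A) = A.
Proof.
move=> hA; have hA' := finv_chain hA; move: hA'.
rewrite /finv; case: ifP => hh hA'.
  set W := meet (minH A) m.
  case: (minH_spec hA hh) => hV hVm hmin.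
  have hWm : lef W m by exact: lef_meetr.
  have hVW : minH A != W by apply/eqP => e; move: hVm; rewrite e hWm.
  have hVt : minH A \in tog A W by rewrite in_tog (negbTE hVW).
  have hh' : high (tog A W) by apply/existsP; exists (minH A); rewrite hVt hVm.
  rewrite hh'.
  suff -> : minH (tog A W) = minH A by rewrite togK.
  case: (minH_spec hA' hh') => hV' hV'm hmin'.
  have hV'A : minH (tog A W) \in A.
    move: hV'; rewrite in_tog; case: eqP => // e.
    by move: hV'm; rewrite e hWm.
  apply: lef_antisym; [exact: chain_canon hA' hV' | exact: chain_canon hA hV | | ].
    exact: hmin' hVt hVm.
  exact: hmin hV'A hV'm.
have hh' : high (tog A m) = false.
  apply/negbTE; rewrite negb_exists; apply/forallP => U.
  rewrite negb_and negbK in_tog; case: eqP => [->|_]; first by rewrite lef_refl orbT.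
  by move/negbT: hh; rewrite negb_exists => /forallP /(_ U); rewrite negb_and negbK.
by rewrite hh' togK.
Qed.

Lemma finv_sign A : (-1) ^+ #|finv A| = - (-1) ^+ #|A| :> algC.
Proof. by rewrite /finv; case: ifP => _; rewrite tog_sign. Qed.

Lemma Zs_zero : Zs Theta X (S0 k d) = 0.
Proof.
have e : Zs Theta X (S0 k d) = - Zs Theta X (S0 k d).
  rewrite {1}/Zs (reindex_onto finv finv); last by move=> A hA; exact: finv_inv.
  rewrite /Zs -sumrN; apply: eq_big => A.
    apply/idP/idP => [/andP [h1 /eqP h2]|h].
      by rewrite -h2; exact: finv_chain.
    by rewrite finv_chain //= finv_inv.
  by move=> _; rewrite finv_sign.
have : Zs Theta X (S0 k d) *+ 2 = 0 by rewrite mulr2n {1}e addNr.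
by move/eqP; rewrite mulrn_eq0 /= => /eqP.
Qed.

End WithMax.

End Invol.

Lemma Zs_ss (I : finType) (r : I -> I -> nat) (k : finFieldType) (Theta : I -> int)
  (d : dimvec I) (X : rep r k d) : (0 < totdim d)%N ->
  Zs Theta X (S0 k d) = if semistable Theta X then 1 else 0.
Proof.
move=> hN; case: ifP => hss.
  rewrite /Zs (big_pred1 set0) ?cards0 ?expr0 // => A /=.
  apply/idP/idP => [hA|/eqP ->]; last exact: chain0.
  apply/negPn/negP => /set0Pn [U hU].
  case/andP: (chain_P hA hU) => /andP [/andP [hUs hUp] hsl] _.
  move/forallP: hss => /(_ U); rewrite hUs hUp /= => hle.
  by move: hsl; rewrite /rk; rewrite ltNge; move: hle; rewrite /sub_dim => ->.
have [U0 hU0] : exists U0, Pc Theta X U0.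
  move/negbT: hss; rewrite negb_forall => /existsP [U0]; rewrite negb_imply.
  case/andP => /andP [hs hp] hsl; exists U0; rewrite /Pc hs hp /=.
  by rewrite ltNge.
have hs0 := S0_sub X.
case: (@Order.TotalTheory.arg_maxP _ _ _ (S0 k d) (is_subrep X) (fun U => hval Theta U) hs0)
  => m hm hmax.
have hPm : Pc Theta X m.
  rewrite (@Pc_hval _ _ _ Theta _ X hN) //; apply: lt_le_trans (hmax U0 (Pc_sub hU0)).
  by rewrite -(@Pc_hval _ _ _ Theta _ X hN) // (Pc_sub hU0).
apply: (Zs_zero hN hPm) => U hU; exact: hmax U hU.
Qed.

Lemma sumL_dseq (I : finType) (N s : nat) (t : {ffun 'I_s -> {ffun I -> 'I_N.+1}}) i :
  sumL (dseq t) i = (\sum_(l < s) dv (t l) i)%N.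
Proof. by rewrite /sumL /dseq big_map big_enum. Qed.

Unset Implicit Arguments.

Theorem mainTheorem11 (I : finType) (r : I -> I -> nat) (k : finFieldType)
  (Theta : I -> int) (d : I -> nat) :
  acyclic r -> (0 < totdim d)%N ->
  forall (e : I -> nat) (X : rep r k e),
    chi_ss Theta d X =
    \sum_(s < (totdim d).+1)
      \sum_(t : {ffun 'I_s -> {ffun I -> 'I_(totdim d).+1}} | admissible Theta d t)
        (-1) ^+ (s.-1) * vq k ^ (- euler_star r t)
        * chi_prod (head (fun _ => 0%N) (dseq t)) (behead (dseq t)) X.
Proof.
move=> _ hN e X.
rewrite big_ord_recl big1 ?add0r; last by move=> t /andP [].
transitivity (\sum_(s < totdim d) \sum_(x : {ffun I -> 'I_(totdim d).+1})
   \sum_(t : {ffun 'I_s -> {ffun I -> 'I_(totdim d).+1}})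
   (if admT Theta (rk (S0 k e)) (fcons x t) then (-1)^+s * NP X (S0 k e) (dv x) (dseq t) else 0)); last first.
  apply: eq_bigr => s _.
  symmetry; rewrite big_mkcond sum_fcons; apply: eq_bigr => x _; apply: eq_bigr => t _.
  rewrite admissibleE.
  have -> : rk (S0 k e) = (fun _ => 0%N).
    by apply: functional_extensionality => i; rewrite /rk rank_S0.
  case: ifP => // _.
  rewrite dseq_fcons /= chi_top RP_NP -(EL_dseq r (fcons x t)) dseq_fcons.
  rewrite -mulrA [vq k ^ _ * (_ * _)]mulrA -expfzDr ?vq_neq0 // addNr expr0z mul1r.
  by [].
case hde: (dimeq e d).
  have ed : e = d by apply: functional_extensionality; apply/dimeqP.
  subst e.
  rewrite /chi_ss hde /= -(@Zs_ss _ _ _ Theta _ X hN) -(@Aq_Zs _ _ _ Theta _ X (totdim d) _ (S0_sub X)).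
  - by [].
  - apply/negP => /dimeqP h.
    move: hN; rewrite /totdim big1 // => i _; rewrite -h.
    by rewrite /rk rank_S0.
  - exact: leq_subr.
rewrite /chi_ss hde /=.
symmetry; apply: big1 => s _; apply: big1 => x _; apply: big1 => t _.
case: ifP => // hadm.
have [->|hnz] := eqVneq (NP X (S0 k e) (dv x) (dseq t)) 0; first by rewrite mulr0.
exfalso; move/negbT: hde => /negP; apply; apply/dimeqP => i.
have := NP_nz hnz i; rewrite rank_S0 subn0 => ->.
case/and4P: hadm => _ _ /dimeqP hsum _.
rewrite -(hsum i) /rk rank_S0 add0n -sumL_dseq dseq_fcons.
by [].
Qed.
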